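(* Let $\|\cdot\|$ be a norm on $\mathbb{R}^d$ and $\Phi$ a mirror map whose Bregman divergence satisfies $\frac{m}{2}\|x-y\|^2\le D_\Phi(x,y)\le\frac{M}{2}\|x-y\|^2$ for all $x,y\in\mathbb{R}^d$ and some positive constants $m,M$; let $\kappa=M/m$. For every $\alpha>2\sqrt{\kappa-1}$ there exists a choice of $\beta$ such that Primal Online Balanced Descent (with norm $\|\cdot\|$ and mirror map $\Phi$) has competitive ratio at most $3+O(1/\alpha)$ for SOCO with switching cost $\|\cdot\|$ when all cost functions are locally $\alpha$-polyhedral.
   Context: SOCO: a convex decision set $\mathcal{X}\subseteq\mathbb{R}^d$, a norm $\|\cdot\|$ (switching cost), a starting point $x_0$, and non-negative convex cost functions $f_1,\dots,f_T$ ($f_t=+\infty$ outside $\mathcal{X}$). At round $t$ the algorithm observes $f_t$, then chooses $x_t\in\mathcal{X}$, paying $f_t(x_t)+\|x_t-x_{t-1}\|$. $\mathrm{cost}(ALG)=\sum_t f_t(x_t)+\|x_t-x_{t-1}\|$; $\mathrm{cost}(OPT)$ is the minimum of the same expression over all $(x_1,\dots,x_T)\in\mathcal{X}^T$ chosen with full knowledge. An algorithm is $C$-competitive if $\mathrm{cost}(ALG)\le C\,\mathrm{cost}(OPT)$ for all cost sequences. $D_\Phi(x,y)=\Phi(x)-\Phi(y)-\nabla\Phi(y)^T(x-y)$; $\Pi^\Phi_K(x)=\arg\min_{y\in K}D_\Phi(y,x)$. A function $f_t$ with minimizer $v_t$ is locally $\alpha$-polyhedral w.r.t. $\|\cdot\|$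 if there is $\epsilon>0$ with $f_t(x)-f_t(v_t)\ge\alpha\|x-v_t\|$ for all $x\in\mathcal{X}$ with $\|x-v_t\|\le\epsilon$. Primal Online Balanced Descent with parameter $\beta>0$: for $t=1,\dots,T$: observe $f_t$, let $v_t=\arg\min_x f_t(x)$; if $\|x_{t-1}-v_t\|<\beta f_t(v_t)$ set $x_t=v_t$; otherwise, with $K^l_t=\{x:f_t(x)\le l\}$ and $x(l)=\Pi^\Phi_{K^l_t}(x_{t-1})$, increase $l$ until $\|x(l)-x_{t-1}\|=\beta l$ and set $x_t=x(l)$. *)

(* Defs.v *)
From HB Require Import structures.
From mathcomp Require Import all_boot all_order all_algebra.
From mathcomp Require Import all_classical all_reals all_analysis.
Set Implicit Arguments.
Unset Strict Implicit.
Unset Printing Implicit Defensive.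
Import Order.TTheory GRing.Theory Num.Theory.
Import numFieldNormedType.Exports.
Local Open Scope ring_scope.

Section SOCO.
Variables (R : realType) (d : nat).
Local Notation vec := 'rV[R]_d.

Definition is_norm (N : vec -> R) : Prop :=
  [/\ forall x, N x = 0 -> x = 0,
      forall (a : R) x, N (a *: x) = `|a| * N x
    & forall x y, N (x + y) <= N x + N y].

Definition convex_set (X : vec -> Prop) : Prop :=
  forall x y (l : R), X x -> X y -> 0 <= l -> l <= 1 ->
    X (l *: x + (1 - l) *: y).

Definition convex_on (X : vec -> Prop) (f : vec -> R) : Prop :=
  forall x y (l : R), X x -> X y -> 0 <= l -> l <= 1 ->
    f (l *: x + (1 - l) *: y) <= l * f x + (1 - l) * f y.

(* Bregman divergence D_Phi(x,y) = Phi x - Phi y - <grad Phi(y), x - y>,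
   the last term being the differential of Phi at y applied to x - y. *)
Definition bregman (Phi : vec -> R) (x y : vec) : R :=
  Phi x - Phi y - 'd Phi y (x - y).

Definition is_minimizer (X : vec -> Prop) (f : vec -> R) (v : vec) : Prop :=
  X v /\ forall x, X x -> f v <= f x.

Definition locally_polyhedral (N : vec -> R) (X : vec -> Prop)
    (alpha : R) (f : vec -> R) : Prop :=
  exists v, is_minimizer X f v /\
    exists eps : R, 0 < eps /\
      forall x, X x -> N (x - v) <= eps -> f x - f v >= alpha * N (x - v).

Definition sublevel (X : vec -> Prop) (f : vec -> R) (l : R) : vec -> Prop :=
  fun x => X x /\ f x <= l.

Definition is_bregman_proj (Phi : vec -> R) (K : vec -> Prop) (z p : vec) :=
  K p /\ forall y, K y -> bregman Phi p z <= bregman Phi y z.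

Definition pobd_step (N : vec -> R) (Phi : vec -> R) (beta : R)
    (X : vec -> Prop) (f : vec -> R) (xprev xnext : vec) : Prop :=
  exists v, is_minimizer X f v /\
   ((N (xprev - v) < beta * f v /\ xnext = v) \/
    (beta * f v <= N (xprev - v) /\
     exists l, f v <= l /\
       is_bregman_proj Phi (sublevel X f l) xprev xnext /\
       N (xnext - xprev) = beta * l /\
       (* l is the first level reached when increasing l from f v *)
       forall l' y, f v <= l' -> l' < l ->
         is_bregman_proj Phi (sublevel X f l') xprev y ->
         N (y - xprev) <> beta * l')).

Definition pobd_trajectory (N Phi : vec -> R) (beta : R) (X : vec -> Prop)
    (x0 : vec) (T : nat) (f : nat -> vec -> R) (x : nat -> vec) : Prop :=
  x 0%N = x0 /\
  forall t, (1 <= t <= T)%N -> pobd_step N Phi beta X (f t) (x t.-1) (x t).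

Definition soco_cost (N : vec -> R) (T : nat) (f : nat -> vec -> R)
    (x : nat -> vec) : R :=
  \sum_(1 <= t < T.+1) (f t (x t) + N (x t - x t.-1)).

(* Primal OBD with parameter beta is C-competitive on all SOCO instances
   with switching cost N whose costs are locally alpha-polyhedral:
   cost(ALG) <= C * cost(y) for every comparator sequence y in X^T starting
   at x0, i.e. cost(ALG) <= C * cost(OPT). *)
Definition pobd_competitive (N Phi : vec -> R) (alpha beta C : R) : Prop :=
  forall (X : vec -> Prop) (x0 : vec) (T : nat) (f : nat -> vec -> R)
         (x : nat -> vec),
    convex_set X ->
    (forall t, (1 <= t <= T)%N ->
        convex_on X (f t) /\ (forall z, X z -> 0 <= f t z) /\
        locally_polyhedral N X alpha (f t)) ->
    pobd_trajectory N Phi beta X x0 T f x ->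
    forall y : nat -> vec, y 0%N = x0 -> (forall t, (1 <= t <= T)%N -> X (y t)) ->
      soco_cost N T f x <= C * soco_cost N T f y.

End SOCO.

(* Main.v *)
Require Import Defs.
From HB Require Import structures.
From mathcomp Require Import all_boot all_order all_algebra.
From mathcomp Require Import all_classical all_reals all_analysis.
From mathcomp Require Import lra.
Import Order.TTheory GRing.Theory Num.Theory.
Import numFieldNormedType.Exports.
Local Open Scope ring_scope.

Section Aux.
Variables (R : realType) (d : nat) (N : 'rV[R]_d -> R).
Hypothesis nN : is_norm N.

Lemma N0 : N 0 = 0.
Proof.
case: nN => _ hom _.
by rewrite -(scale0r (0 : 'rV[R]_d)) hom normr0 mul0r.
Qed.

Lemma NN x : N (- x) = N x.
Proof.
case: nN => _ hom _.
by rewrite -scaleN1r hom normrN normr1 mul1r.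
Qed.

Lemma Nsym x y : N (x - y) = N (y - x).
Proof. by rewrite -NN opprB. Qed.

Lemma Ntri x y z : N (x - z) <= N (x - y) + N (y - z).
Proof.
case: nN => _ _ tri.
have -> : x - z = (x - y) + (y - z) by rewrite addrA subrK.
exact: tri.
Qed.

Lemma Nge0 x : 0 <= N x.
Proof.
have := Ntri x 0 x; rewrite subrr N0 sub0r NN subr0. lra.
Qed.

Lemma poly_global X f alpha : 0 < alpha -> Defs.convex_set X -> Defs.convex_on X f ->
  locally_polyhedral N X alpha f -> forall v, is_minimizer X f v ->
  forall x, X x -> alpha * N (x - v) <= f x - f v.
Proof.
move=> a0 cX cf [vp [[Xvp minvp] [eps [eps0 Hloc]]]].
have G : forall x, X x -> alpha * N (x - vp) <= f x - f vp.
  move=> x Xx.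
  have [le|lt] := leP (N (x - vp)) eps; first exact: Hloc.
  have Np : 0 < N (x - vp) by exact: (lt_trans eps0 lt).
  set lam := eps / N (x - vp).
  have l0 : 0 < lam by rewrite divr_gt0.
  have l1 : lam < 1 by rewrite ltr_pdivrMr // mul1r.
  set z := lam *: x + (1 - lam) *: vp.
  have Xz : X z.
    have := cX x vp lam Xx Xvp (ltW l0) (ltW l1). rewrite -/z. done.
  have ez : z - vp = lam *: (x - vp).
    by rewrite /z scalerBr scalerBl scale1r addrCA addrAC subrr add0r.
  have Nz : N (z - vp) = eps.
    case: nN => _ hom _.
    by rewrite ez hom ger0_norm ?(ltW l0) // /lam mulfVK // gt_eqF.
  have fz := cf x vp lam Xx Xvp (ltW l0) (ltW l1).
  have hz : alpha * N (z - vp) <= f z - f vp by apply: Hloc; rewrite ?Nz.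
  rewrite Nz in hz.
  have e2 : alpha * eps = lam * (alpha * N (x - vp)).
    by rewrite /lam mulrCA mulfVK // gt_eqF.
  have : lam * (alpha * N (x - vp)) <= lam * (f x - f vp).
    rewrite -e2 mulrBr; rewrite -/z in fz. lra.
  by rewrite ler_pM2l.
move=> v [Xv minv] x Xx.
have ev : v = vp.
  have h1 := minv vp Xvp. have h2 := minvp v Xv.
  have hg := G v Xv.
  have h3 := Nge0 (v - vp).
  have h4 : N (v - vp) = 0.
    apply/eqP; rewrite eq_le h3 andbT.
    have : alpha * N (v - vp) <= 0 by lra.
    by rewrite pmulr_rle0.
  case: nN => H _ _; apply/eqP; rewrite -subr_eq0; apply/eqP.
  exact: H.
by rewrite ev; apply: G.
Qed.

Lemma step_bound Phi X f alpha (a0 : 0 < alpha) xp xn y :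
  Defs.convex_set X -> Defs.convex_on X f -> (forall z, X z -> 0 <= f z) ->
  locally_polyhedral N X alpha f -> X y ->
  pobd_step N Phi (1 + 4 / alpha) X f xp xn ->
  f xn + N (xn - xp) + 2 * N (xn - y) - 2 * N (xp - y)
    <= (2 + 4 / alpha) * f y.
Proof.
move=> cX cf fpos lp Xy [v [vmin H]].
have G := @poly_global X f alpha a0 cX cf lp v vmin.
have Xv := vmin.1.
have fv0 := fpos v Xv.
have Gy := G y Xy.
have fvy := vmin.2 y Xy.
have na0 := Nge0 (xp - v).
have by1 : N (y - v) <= f y / alpha.
  rewrite ler_pdivlMr // mulrC; lra.
have e1 : 4 / alpha * f y = 4 * (f y / alpha).
  by rewrite [f y / _]mulrC mulrA.
rewrite mulrDl.
have Nyv := Nsym y v.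
have t1 := Ntri xp y v.
case: H => [[_ ->] | [_ [l [fvl [[[Xxn fxnl] _] [Hs _]]]]]].
  have := Nsym v xp. lra.
have Gx := G xn Xxn.
have bx : N (xn - v) <= l / alpha.
  rewrite ler_pdivlMr // mulrC; lra.
have e2 : 4 / alpha * l = 4 * (l / alpha).
  by rewrite [l / _]mulrC mulrA.
rewrite mulrDl mul1r in Hs.
have t2 := Ntri xn v y.
have t3 := Ntri xn v xp.
have := Nsym v xp.
lra.
Qed.

End Aux.

Theorem theorem9 (R : realType) (d : nat) (N : 'rV[R]_d -> R)
    (Phi : 'rV[R]_d -> R) (m M : R) :
  is_norm N ->
  (forall x : 'rV[R]_d, differentiable Phi x) ->
  0 < m -> 0 < M ->
  (forall x y : 'rV[R]_d,
      m / 2 * N (x - y) ^+ 2 <= bregman Phi x y /\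
      bregman Phi x y <= M / 2 * N (x - y) ^+ 2) ->
  let kappa := M / m in
  exists g : R -> R,
    (forall alpha : R, 2 * Num.sqrt (kappa - 1) < alpha ->
       exists beta : R, 0 < beta /\ pobd_competitive N Phi alpha beta (g alpha))
    /\ (exists (K alpha0 : R), forall alpha : R, alpha0 <= alpha ->
          g alpha <= 3 + K / alpha).
Proof.
move=> nN _ _ _ _ kappa.
exists (fun a => 2 + 4 / a); split; last first.
  by exists 4, 1 => alpha _; lra.
move=> alpha Ha.
have a0 : 0 < alpha.
  apply: le_lt_trans Ha; rewrite mulr_ge0 //.
have i0 : 0 <= 4 / alpha by rewrite divr_ge0 // ltW.
exists (1 + 4 / alpha); split; first lra.
move=> X x0 T f x cX hf [hx0 htr] y hy0 hy.
set g := 2 + 4 / alpha.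
have main : forall n, (n <= T)%N ->
  \sum_(1 <= t < n.+1) (f t (x t) + N (x t - x t.-1)) + 2 * N (x n - y n)
   <= g * \sum_(1 <= t < n.+1) (f t (y t) + N (y t - y t.-1)).
  elim=> [|n IH] hn.
    by rewrite !big_geq // hx0 hy0 subrr (@N0 _ _ N nN) mulr0 mulr0 addr0.
  rewrite big_nat_recr //= [X in _ <= g * X]big_nat_recr //= mulrDr.
  have hn' : (1 <= n.+1 <= T)%N by rewrite hn.
  have [cf [fp lp]] := hf _ hn'.
  have sb := @step_bound _ _ _ nN Phi X (f n.+1) alpha a0 (x n) (x n.+1) (y n.+1) cX cf fp lp (hy _ hn') (htr _ hn').
  have IH' := IH (ltnW hn).
  have t1 := @Ntri _ _ N nN (x n) (y n) (y n.+1).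
  have s1 := @Nsym _ _ N nN (y n) (y n.+1).
  have ny := @Nge0 _ _ N nN (y n.+1 - y n).
  have hg : 2 * N (y n.+1 - y n) <= g * N (y n.+1 - y n).
    by rewrite ler_wpM2r // /g; lra.
  rewrite /= in sb.
  rewrite mulrDr -/g in sb *.
  set S1 := \sum_(1 <= i < n.+1) (f i (x i) + N (x i - x i.-1)) in IH' *.
  set S2 := \sum_(1 <= i < n.+1) (f i (y i) + N (y i - y i.-1)) in IH' *.
  move: IH' hg sb t1 s1 ny; clearbody g S1 S2. lra.
apply: le_trans (main T (leqnn T)).
by rewrite lerDl mulr_ge0 // (@Nge0 _ _ N nN).
Qed.
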